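(* Let $G=(V,E)$ be a finite graph with edge weights $\mathbf{v}=(v_e)_{e\in E}$, let $q$ be an indeterminate, and let $i,j\in V$ with $i\ne j$. Then \[ Z_G(q,\mathbf{v})=\sum_{\substack{W\subseteq V\\ W\ni i,\ W\not\ni j}}\Bigl[q-1+\prod_{e\in E(W,j)}(1+v_e)\Bigr]C_{G[W]}(\mathbf{v})\,Z_{G[V\setminus W]}(q,\mathbf{v}), \] where $E(W,j)$ denotes the set of edges with one endpoint in $W$ and the other endpoint at $j$. In particular, \[ C_G(\mathbf{v})=\sum_{\substack{W\subseteq V\\ W\ni i,\ W\not\ni j}}\Bigl[\prod_{e\in E(W,j)}(1+v_e)-1\Bigr]C_{G[W]}(\mathbf{v})\,C_{G[V\setminus W]}(\mathbf{v}). \]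
   Context: Graphs may have loops and multiple edges. For a finite graph $H$: $Z_H(q,\mathbf{v})=\sum_{A\subseteq E(H)}q^{k(A)}\prod_{e\in A}v_e$ with $k(A)$ the number of connected components of $(V(H),A)$, and $C_H(\mathbf{v})=\sum_{A\subseteq E(H),\,k(A)=1}\prod_{e\in A}v_e$. $G[W]$ is the induced subgraph on $W$ (edges weighted as in $G$). *)

(* Defs.v *)
From mathcomp Require Import all_boot all_order all_algebra.
Set Implicit Arguments. Unset Strict Implicit. Unset Printing Implicit Defensive.
Import GRing.Theory.
Local Open Scope ring_scope.

(* A finite multigraph (loops and multiple edges allowed): vertex type V,
   edge type E, each edge e has endpoints src e and tgt e (orientation
   irrelevant for everything below). *)
Section Graph.
Variables (V E : finType) (src tgt : E -> V).

Definition ind_edges (W : {set V}) : {set E} :=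
  [set e | (src e \in W) && (tgt e \in W)].

Definition adj (A : {set E}) : rel V :=
  fun x y => [exists e in A, ((src e == x) && (tgt e == y)) ||
                             ((src e == y) && (tgt e == x))].

Definition ncomp (W : {set V}) (A : {set E}) : nat :=
  #|[set [set y in W | connect (adj A) x y] | x in W]|.

Definition Zpol (R : comNzRingType) (W : {set V}) (q : R) (v : E -> R) : R :=
  \sum_(A : {set E} | A \subset ind_edges W) q ^+ ncomp W A * \prod_(e in A) v e.

Definition Cpol (R : comNzRingType) (W : {set V}) (v : E -> R) : R :=
  \sum_(A : {set E} | (A \subset ind_edges W) && (ncomp W A == 1%N))
     \prod_(e in A) v e.

Definition cut_edges (W : {set V}) (j : V) : {set E} :=
  [set e | ((src e \in W) && (tgt e == j)) || ((tgt e \in W) && (src e == j))].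

End Graph.

(* Main.v *)
Require Import Defs.
From mathcomp Require Import all_boot all_order all_algebra.
From mathcomp Require Import ring.
Import GRing.Theory.
Local Open Scope ring_scope.
Set Implicit Arguments. Unset Strict Implicit. Unset Printing Implicit Defensive.

Section Aux.
Variables (V E : finType) (src tgt : E -> V).
Local Notation adjA := (adj src tgt).
Local Notation nc := (ncomp src tgt).
Local Notation ind := (ind_edges src tgt).
Implicit Types (A B : {set E}) (W Y : {set V}).

Lemma adjP A x y : reflect (exists2 e, e \in A &
   ((src e == x) && (tgt e == y)) || ((src e == y) && (tgt e == x))) (adjA A x y).
Proof.
apply: (iffP existsP) => [[e /andP[eA H]] | [e eA H]]; first by exists e.
by exists e; rewrite eA.
Qed.

Lemma adj_sym A : symmetric (adjA A).
Proof. by move=> x y; apply/adjP/adjP => -[e eA H]; exists e; rewrite // orbC. Qed.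

Lemma csym A : connect_sym (adjA A).
Proof. exact: sym_connect_sym (adj_sym A). Qed.

Lemma cmono A B x y : A \subset B -> connect (adjA A) x y -> connect (adjA B) x y.
Proof.
move=> sAB; apply: connect_sub => {}x {}y /adjP[e eA H]; apply: connect1.
by apply/adjP; exists e => //; apply: (subsetP sAB).
Qed.

Lemma connect_inv A B (P : pred V) (f : V -> V) :
  (forall x y, P x -> adjA A x y -> P y && connect (adjA B) (f x) (f y)) ->
  forall x y, P x -> connect (adjA A) x y -> P y && connect (adjA B) (f x) (f y).
Proof.
move=> H x y Px /connectP[p]; elim: p x Px => [|z p IH] x Px /=.
  by move=> _ ->; rewrite Px connect0.
case/andP => axz pz ey; have /andP[Pz c1] := H _ _ Px axz.
have /andP[Py c2] := IH _ Pz pz ey; rewrite Py; exact: connect_trans c1 c2.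
Qed.

Definition cls (W : {set V}) A x := [set y in W | connect (adjA A) x y].

Lemma cls_eq W A x y : x \in W -> y \in W -> (cls W A x == cls W A y) = connect (adjA A) x y.
Proof.
move=> xW yW; apply/eqP/idP => [e | cxy].
  have : y \in cls W A y by rewrite inE yW connect0.
  by rewrite -e inE => /andP[_ ->].
have cyx : connect (adjA A) y x by rewrite csym.
apply/setP => z; rewrite !inE; case: (z \in W) => //=; apply/idP/idP => h.
  exact: connect_trans cyx h.
exact: connect_trans cxy h.
Qed.

Lemma card_fib_le (T T1 T2 : finType) (X : {set T}) (h1 : T -> T1) (h2 : T -> T2) :
  {in X &, forall a b, h1 a = h1 b -> h2 a = h2 b} -> (#|h2 @: X| <= #|h1 @: X|)%N.
Proof.
move=> H; case: (set_0Vmem X) => [-> | [x0 x0X]]; first by rewrite !imset0 cards0.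
pose phi c := h2 (odflt x0 [pick x in X | h1 x == c]).
have phiE x : x \in X -> phi (h1 x) = h2 x.
  move=> xX; rewrite /phi; case: pickP => [x' /andP[x'X /eqP e] | none] /=.
    exact: H.
  by have := none x; rewrite xX eqxx.
apply: (leq_trans _ (leq_imset_card phi _)); apply: subset_leq_card.
apply/subsetP => _ /imsetP[x xX ->]; apply/imsetP; exists (h1 x).
  exact: imset_f.
by rewrite phiE.
Qed.

Lemma card_fib (T T1 T2 : finType) (X : {set T}) (h1 : T -> T1) (h2 : T -> T2) :
  {in X &, forall a b, (h1 a == h1 b) = (h2 a == h2 b)} -> #|h1 @: X| = #|h2 @: X|.
Proof.
move=> H; apply/eqP; rewrite eqn_leq !card_fib_le // => x y xX yX e;
  apply/eqP; by rewrite ?H // ?e // -?H // e.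
Qed.

Lemma ncompE W A : nc W A = #|cls W A @: W|.
Proof. by []. Qed.

Lemma ncomp_map (X Y : {set V}) A B (f : V -> V) :
  {in X, forall x, f x \in Y} ->
  {in X &, forall x y, connect (adjA A) x y = connect (adjA B) (f x) (f y)} ->
  {in Y, forall y, exists2 x, x \in X & connect (adjA B) (f x) y} ->
  nc X A = nc Y B.
Proof.
move=> fY Hc Hs; rewrite !ncompE.
rewrite (@card_fib _ _ _ X (cls X A) (fun x => cls Y B (f x))); last first.
  by move=> x y xX yX; rewrite !cls_eq ?fY // Hc.
rewrite (imset_comp (cls Y B) f); suff -> : cls Y B @: (f @: X) = cls Y B @: Y by [].
apply/eqP; rewrite eqEsubset.
apply/andP; split; apply/subsetP.
  by move=> _ /imsetP[y /imsetP[x xX ->] ->]; apply: imset_f; exact: fY.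
move=> _ /imsetP[y yY ->]; have [x xX cxy] := Hs y yY.
apply/imsetP; exists (f x); first exact: imset_f.
by apply/eqP; rewrite eq_sym cls_eq ?fY.
Qed.

Lemma ncomp1P W A i : i \in W ->
  reflect (forall y, y \in W -> connect (adjA A) i y) (nc W A == 1%N).
Proof.
move=> iW; rewrite ncompE; apply: (iffP idP).
  move/cards1P => [c hc] y yW.
  have : cls W A i \in [set c] by rewrite -hc; apply: imset_f.
  have : cls W A y \in [set c] by rewrite -hc; apply: imset_f.
  rewrite !inE => /eqP e1 /eqP e2.
  by rewrite -(cls_eq A iW yW) e1 e2.
move=> H; apply/cards1P; exists (cls W A i); apply/setP => c; rewrite inE.
apply/imsetP/eqP => [[x xW ->] | ->]; last by exists i.
by apply/eqP; rewrite cls_eq // csym; apply: H.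
Qed.

Lemma ncomp_gt0 W A x : x \in W -> (0 < nc W A)%N.
Proof. by move=> xW; rewrite ncompE; apply/card_gt0P; exists (cls W A x); apply: imset_f. Qed.

Lemma ncomp_isol W A i : i \notin W -> A \subset ind W -> nc (i |: W) A = (nc W A).+1.
Proof.
move=> iW sA.
have noadj y : ~~ adjA A i y.
  apply/negP => /adjP[e /(subsetP sA)]; rewrite /ind_edges inE => /andP[s1 t1].
  by case/orP => /andP[/eqP e1 /eqP e2]; subst; rewrite ?s1 ?t1 in iW.
have ci y : connect (adjA A) i y -> y = i.
  move=> c.
  have H : forall x z, pred1 i x -> adjA A x z -> pred1 i z && connect (adjA A) (id x) (id z).
    by move=> x z /= /eqP -> a; move: (noadj z); rewrite a.
  by case/andP: (connect_inv H (eqxx i) c) => /eqP.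
rewrite !ncompE imsetU1 cardsU1.
have -> : cls (i |: W) A i = [set i].
  apply/setP => y; rewrite !inE; apply/andP/eqP => [[_ /ci] // | ->].
  by rewrite eqxx connect0.
have -> : cls (i |: W) A @: W = cls W A @: W.
  apply: eq_in_imset => x xW; apply/setP => y; rewrite !inE.
  case: (eqVneq y i) => [-> | yi] /=; last by [].
  rewrite (negbTE iW); apply/negP => c; rewrite csym in c.
  by move: xW; rewrite (ci _ c) (negbTE iW).
suff -> : [set i] \notin cls W A @: W by rewrite add1n.
apply/imsetP => -[x xW e].
have : i \in cls W A x by rewrite -e set11.
by rewrite inE (negbTE iW).
Qed.
End Aux.

Section Main.
Variables (V E : finType) (src tgt : E -> V).
Local Notation adjA := (adj src tgt).
Local Notation nc := (ncomp src tgt).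
Local Notation ind := (ind_edges src tgt).
Implicit Types (A B S : {set E}) (Y : {set V}).
Variables (i j : V) (W : {set V}) (iW : i \in W) (jW : j \notin W).

Definition D := ind (~: [set j]).
Definition comp A := [set y | connect (adjA (A :&: D)) i y].
Local Notation cut := (cut_edges src tgt W j).

Lemma indE Y e : (e \in ind Y) = (src e \in Y) && (tgt e \in Y).
Proof. by rewrite /ind_edges inE. Qed.
Lemma inD e : (e \in D) = (src e != j) && (tgt e != j).
Proof. by rewrite /D indE !inE. Qed.
Lemma cutE e : (e \in cut) = ((src e \in W) && (tgt e == j)) || ((tgt e \in W) && (src e == j)).
Proof. by rewrite /cut_edges inE. Qed.
Lemma neqj x : x \in W -> x != j.
Proof. by move=> xW; apply/eqP => e; move: jW; rewrite -e xW. Qed.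

Lemma comp_i A : i \in comp A.
Proof. by rewrite inE connect0. Qed.

Lemma comp_j A : j \notin comp A.
Proof.
rewrite inE; apply/negP => c.
have H : forall x z, (x != j) -> adjA (A :&: D) x z -> (z != j) && connect (adjA A) (id x) (id z).
  move=> x z _ /adjP[e]; rewrite in_setI inD => /andP[eA /andP[s t]].
  case/orP => /andP[/eqP e1 /eqP e2]; subst; rewrite ?s ?t /=; apply: connect1; apply/adjP; exists e => //.
    by rewrite !eqxx.
  by rewrite !eqxx orbT.
by case/andP: (connect_inv H (neqj iW) c) => /eqP.
Qed.

Lemma comp_step A e : e \in A -> src e != j -> tgt e != j ->
  (src e \in comp A) = (tgt e \in comp A).
Proof.
move=> eA s t; have eAD : e \in A :&: D by rewrite in_setI eA inD s t.
have a1 : adjA (A :&: D) (src e) (tgt e) by apply/adjP; exists e; rewrite // !eqxx.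
rewrite !inE; apply/idP/idP => c.
  exact: connect_trans c (connect1 a1).
by apply: connect_trans c _; rewrite csym; apply: connect1.
Qed.

Lemma comp_eq A : (comp A == W) =
  (nc W (A :&: ind W) == 1%N) && (A \subset ind W :|: ind (~: W) :|: cut).
Proof.
apply/idP/andP.
- move/eqP=> cW; split.
  + apply/(ncomp1P src tgt _ iW) => y yW; have : y \in comp A by rewrite cW.
    rewrite inE => c.
    have H : forall x z, (x \in comp A) -> adjA (A :&: D) x z ->
        (z \in comp A) && connect (adjA (A :&: ind W)) (id x) (id z).
      move=> x z xc a; have zc : z \in comp A.
        by rewrite /comp !inE in xc *; exact: connect_trans xc (connect1 a).
      rewrite zc /=; apply: connect1; case/adjP: a => e; rewrite inE => /andP[eA _] h.
      apply/adjP; exists e => //; rewrite in_setI eA indE; move: xc zc; rewrite cW.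
      by case/orP: h => /andP[/eqP -> /eqP ->] xW zW; rewrite ?xW ?zW.
    by case/andP: (connect_inv H (comp_i A) c).
  + apply/subsetP=> e eA; rewrite !in_setU !indE cutE !in_setC.
    have st := @comp_step A e eA; rewrite cW in st.
    case sW: (src e \in W); case tW: (tgt e \in W) => //=.
    * case: (eqVneq (tgt e) j) => // tj; move: (st (neqj sW) tj).
      by rewrite sW tW.
    * case: (eqVneq (src e) j) => // sj; move: (st sj (neqj tW)).
      by rewrite sW tW.
- case=> n1 sub; apply/eqP/setP => y; rewrite inE; apply/idP/idP.
  + move=> c.
    have H : forall x z, (x \in W) -> adjA (A :&: D) x z ->
        (z \in W) && connect (adjA A) (id x) (id z).
      move=> x z xW /adjP[e]; rewrite in_setI inD => /andP[eA /andP[s t]] h.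
      have : e \in ind W :|: ind (~: W) :|: cut by apply: (subsetP sub).
      rewrite !in_setU !indE cutE !in_setC (negbTE s) (negbTE t) /= !andbF /= orbF.
      case/orP: h => /andP[/eqP e1 /eqP e2]; subst; rewrite ?xW /= ?andbT ?andbF ?orbF => zW;
        rewrite zW /=; apply: connect1; apply/adjP; exists e => //; rewrite !eqxx ?orbT //.
    by case/andP: (connect_inv H iW c).
  + move=> yW; have c := ncomp1P src tgt _ iW n1 y yW; apply: cmono c.
    apply: setIS; apply/subsetP => e; rewrite indE inD => /andP[s t].
    by rewrite !neqj.
Qed.

Lemma ncomp_dec A1 A2 S : A1 \subset ind W -> nc W A1 = 1%N ->
  A2 \subset ind (~: W) -> S \subset cut ->
  nc [set: V] (A1 :|: A2 :|: S) = (nc (~: W) A2 + (S == set0))%N.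
Proof.
move=> s1 n1 s2 s3; set A := A1 :|: A2 :|: S.
have sA1 : A1 \subset A by apply/subsetP=> e eA; rewrite /A !inE eA.
have sA2 : A2 \subset A by apply/subsetP=> e eA; rewrite /A !inE eA ?orbT.
have conA1 x : x \in W -> connect (adjA A) i x.
  move=> xW; apply: (cmono sA1); apply: (ncomp1P src tgt _ iW) => //; exact/eqP.
have in1 e : e \in A1 -> (src e \in W) && (tgt e \in W) by move/(subsetP s1); rewrite indE.
have in2 e : e \in A2 -> (src e \notin W) && (tgt e \notin W) by move/(subsetP s2); rewrite indE !inE.
have in3 e : e \in S -> ((src e \in W) && (tgt e == j)) || ((tgt e \in W) && (src e == j))
  by move/(subsetP s3); rewrite cutE.
case: (eqVneq S set0) => [S0 | Sn0].
- rewrite addn1 -(@ncomp_isol _ _ _ _ _ _ i); last by []; last by rewrite inE negbK.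
  pose f x := if x \in W then i else x.
  have key x : connect (adjA A) x (f x).
    rewrite /f; case: ifP => xW; last exact: connect0.
    by rewrite csym; apply: conA1.
  apply: (ncomp_map (f := f)).
  + by move=> x _; rewrite /f; case: ifP => xW; rewrite !inE ?eqxx // xW orbT.
  + move=> x y _ _; apply/idP/idP => c.
      have H : forall a b, predT a -> adjA A a b -> predT b && connect (adjA A2) (f a) (f b).
        move=> a b _ /adjP[e]; rewrite /A S0 setU0 inE => /orP[eA | eA] h.
          have /andP[sW tW] := in1 e eA.
          by case/orP: h => /andP[/eqP <- /eqP <-]; rewrite /f sW tW connect0.
        have /andP[sW tW] := in2 e eA.
        case/orP: h => /andP[/eqP <- /eqP <-]; rewrite /f (negbTE sW) (negbTE tW) /=;
          apply: connect1; apply/adjP; exists e; rewrite // !eqxx ?orbT //.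
      by case/andP: (connect_inv H isT c).
    apply: connect_trans (key x) _; apply: connect_trans (cmono sA2 c) _.
    by rewrite csym; apply: key.
  + move=> y; case/setU1P => [-> | yW].
      by exists i; rewrite // /f iW connect0.
    by exists y; rewrite // /f; rewrite inE in yW; rewrite (negbTE yW) connect0.
- rewrite addn0.
  pose f x := if x \in W then j else x.
  have [e0 e0S] := set0Pn _ Sn0.
  have e0A : e0 \in A by rewrite /A !inE e0S !orbT.
  have conj x : x \in W -> connect (adjA A) x j.
    move=> xW; have cxi : connect (adjA A) x i by rewrite csym; apply: conA1.
    case/orP: (in3 e0 e0S) => /andP[wW /eqP ej].
      apply: connect_trans cxi (connect_trans (conA1 _ wW) (connect1 _)).
      by apply/adjP; exists e0; rewrite // ej !eqxx.
    apply: connect_trans cxi (connect_trans (conA1 _ wW) (connect1 _)).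
    by apply/adjP; exists e0; rewrite // ej !eqxx orbT.
  have key x : connect (adjA A) x (f x).
    rewrite /f; case: ifP => xW; last exact: connect0.
    exact: conj.
  have fj : f j = j by rewrite /f (negbTE jW).
  apply: (ncomp_map (f := f)).
  + by move=> x _; rewrite /f inE; case: ifP => xW //; rewrite xW.
  + move=> x y _ _; apply/idP/idP => c.
      have H : forall a b, predT a -> adjA A a b -> predT b && connect (adjA A2) (f a) (f b).
        move=> a b _ /adjP[e]; rewrite /A !inE => /orP[/orP[eA | eA] | eA] h.
        * have /andP[sW tW] := in1 e eA.
          by case/orP: h => /andP[/eqP <- /eqP <-]; rewrite /f sW tW connect0.
        * have /andP[sW tW] := in2 e eA.
          case/orP: h => /andP[/eqP <- /eqP <-]; rewrite /f (negbTE sW) (negbTE tW) /=;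
            apply: connect1; apply/adjP; exists e; rewrite // !eqxx ?orbT //.
        * case/orP: (in3 e eA) => /andP[wW /eqP ej];
          by case/orP: h => /andP[/eqP <- /eqP <-]; rewrite ej fj /f wW connect0.
      by case/andP: (connect_inv H isT c).
    apply: connect_trans (key x) _; apply: connect_trans (cmono sA2 c) _.
    by rewrite csym; apply: key.
  + move=> y yW; exists y; rewrite // /f; rewrite inE in yW; by rewrite (negbTE yW) connect0.
Qed.
End Main.

Section Alg.
Variable (R : comNzRingType).

Lemma sum3 (I1 I2 I3 : finType) (P1 : pred I1) (P2 : pred I2) (P3 : pred I3)
  (f1 : I1 -> R) (f2 : I2 -> R) (f3 : I3 -> R) :
  (\sum_(z | P3 z) f3 z) * (\sum_(x | P1 x) f1 x) * (\sum_(y | P2 y) f2 y) =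
  \sum_(x | P1 x) \sum_(y | P2 y) \sum_(z | P3 z) f1 x * f2 y * f3 z.
Proof.
rewrite -mulrA mulrC -mulrA big_distrl /=; apply: eq_bigr => x _.
rewrite big_distrl big_distrr /=; apply: eq_bigr => y _.
rewrite big_distrr big_distrr /=; apply: eq_bigr => z _.
by rewrite mulrA.
Qed.

Variables (E : finType) (v : E -> R).

Lemma expand0 (X : {set E}) :
  \prod_(e in X) (1 + v e) = \sum_(S : {set E} | S \subset X) \prod_(e in S) v e.
Proof.
rewrite big_mkcond /=.
rewrite (eq_bigr (fun e => (if e \in X then v e else 0) + 1)); last first.
  by move=> e _; case: ifP => _; rewrite ?add0r // addrC.
transitivity (\sum_(J : {set E}) \prod_i (if i \in J then (if i \in X then v i else 0) else 1)).
  by rewrite bigA_distr.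
rewrite (bigID (fun S : {set E} => S \subset X)) /=.
rewrite [X in _ + X]big1 ?addr0; last first.
  move=> S nS; have [e eS eX] := subsetPn nS.
  by rewrite (bigD1 e) // eS (negbTE eX); exact: mul0r.
apply: eq_big => [S | S sX]; first by [].
rewrite [RHS]big_mkcond; apply: eq_bigr => e _.
by case: ifP => eS //; rewrite (subsetP sX e eS).
Qed.

Lemma expand (X : {set E}) (a : R) :
  \sum_(S : {set E} | S \subset X) (if S == set0 then a else 1) * \prod_(e in S) v e
  = a - 1 + \prod_(e in X) (1 + v e).
Proof.
rewrite expand0 (bigD1 set0) ?sub0set // [in RHS](bigD1 set0) ?sub0set // big_set0.
have -> : (if set0 == set0 :> {set E} then a else 1) = a by rewrite eqxx.
rewrite mulr1 addrA subrK; congr (_ + _); apply: eq_bigr => S /andP[_ /negbTE ->].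
by rewrite mul1r.
Qed.
End Alg.

Lemma rearr (R : comNzRingType) (a g p1 p2 p3 : R) :
  a * g * (p1 * p2 * p3) = p1 * (a * p2) * (g * p3).
Proof. ring. Qed.

Lemma disjP (T : finType) (A B : {set T}) :
  (forall x, x \in A -> x \in B -> False) -> [disjoint A & B].
Proof.
move=> H; rewrite disjoints_subset; apply/subsetP => x xA; rewrite inE.
by apply/negP => xB; exact: H x xA xB.
Qed.

Lemma disjE (T : finType) (A B : {set T}) x : [disjoint A & B] -> x \in A -> x \in B -> False.
Proof. by move=> d a; rewrite (disjointFr d a). Qed.

Lemma triple (E : finType) (X Y Z A1 A2 S : {set E}) :
  [disjoint X & Y] -> [disjoint X & Z] -> [disjoint Y & Z] ->
  A1 \subset X -> A2 \subset Y -> S \subset Z ->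
  [/\ (A1 :|: A2 :|: S) :&: X = A1, (A1 :|: A2 :|: S) :&: Y = A2
    & (A1 :|: A2 :|: S) :&: Z = S].
Proof.
move=> dXY dXZ dYZ s1 s2 s3.
have z12 : A1 :&: Y = set0 by apply: disjoint_setI0; apply: disjointWl s1 dXY.
have z13 : A1 :&: Z = set0 by apply: disjoint_setI0; apply: disjointWl s1 dXZ.
have z21 : A2 :&: X = set0.
  by apply: disjoint_setI0; apply: disjointWl s2 _; rewrite disjoint_sym.
have z23 : A2 :&: Z = set0 by apply: disjoint_setI0; apply: disjointWl s2 dYZ.
have z31 : S :&: X = set0.
  by apply: disjoint_setI0; apply: disjointWl s3 _; rewrite disjoint_sym.
have z32 : S :&: Y = set0.
  by apply: disjoint_setI0; apply: disjointWl s3 _; rewrite disjoint_sym.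
rewrite !setIUl (setIidPl s1) (setIidPl s2) (setIidPl s3).
by rewrite z12 z13 z21 z23 z31 z32 ?setU0 ?set0U.
Qed.

Lemma prodU (R : comNzRingType) (E : finType) (A B : {set E}) (F : E -> R) :
  [disjoint A & B] -> \prod_(e in A :|: B) F e = \prod_(e in A) F e * \prod_(e in B) F e.
Proof. by move=> d; rewrite -bigU //; apply: eq_bigl => e; rewrite !inE. Qed.

Section SumW.
Variables (R : comNzRingType) (V E : finType) (src tgt : E -> V) (v : E -> R) (q : R).
Local Notation nc := (ncomp src tgt).
Local Notation ind := (ind_edges src tgt).
Variables (i j : V) (W : {set V}) (iW : i \in W) (jW : j \notin W).
Local Notation cut := (cut_edges src tgt W j).
Local Notation comp := (comp src tgt i j).

Lemma d12 : [disjoint ind W & ind (~: W)].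
Proof. by apply: disjP => e; rewrite !indE !inE => /andP[-> _] /andP[]. Qed.
Lemma d13 : [disjoint ind W & cut].
Proof.
apply: disjP => e; rewrite indE cutE => /andP[sW tW].
by case/orP => /andP[_ /eqP ej]; move: jW; rewrite -ej ?sW ?tW.
Qed.
Lemma d23 : [disjoint ind (~: W) & cut].
Proof.
apply: disjP => e; rewrite indE cutE !inE => /andP[sW tW].
by case/orP => /andP[h _]; rewrite h in sW tW.
Qed.

Lemma sum_split (F : {set E} -> R) :
  \sum_(A : {set E} | comp A == W) F A =
  \sum_(A1 : {set E} | (A1 \subset ind W) && (nc W A1 == 1%N))
    \sum_(A2 : {set E} | A2 \subset ind (~: W)) \sum_(S : {set E} | S \subset cut) F (A1 :|: A2 :|: S).
Proof.
rewrite [RHS](eq_bigr (fun A1 : {set E} => \sum_(p : {set E} * {set E} |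
   (p.1 \subset ind (~: W)) && (p.2 \subset cut)) F (A1 :|: p.1 :|: p.2)));
  last by move=> A1 _; rewrite pair_big.
rewrite pair_big /=.
rewrite (reindex_onto (fun p : {set E} * ({set E} * {set E}) => p.1 :|: p.2.1 :|: p.2.2)
   (fun A => (A :&: ind W, (A :&: ind (~: W), A :&: cut)))) /=; last first.
  move=> A; rewrite comp_eq // => /andP[_ sub].
  by rewrite -!setIUr; apply/setIidPl.
apply: eq_bigl => -[A1 [A2 S]] /=.
apply/idP/idP.
- case/andP => c /eqP; move: c; move: (A1 :|: A2 :|: S) => A c [<- <- <-].
  rewrite comp_eq // in c; case/andP: c => -> _.
  by rewrite !subsetIr.
- case/andP => /andP[s1 n1] /andP[s2 s3].
  have [e1 e2 e3] := triple d12 d13 d23 s1 s2 s3.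
  rewrite e1 e2 e3 !eqxx andbT comp_eq // e1 n1 /=.
  exact: setUSS (setUSS s1 s2) s3.
Qed.

Lemma prod3 (A1 A2 S : {set E}) : A1 \subset ind W -> A2 \subset ind (~: W) -> S \subset cut ->
  \prod_(e in A1 :|: A2 :|: S) v e =
  \prod_(e in A1) v e * \prod_(e in A2) v e * \prod_(e in S) v e.
Proof.
move=> s1 s2 s3; rewrite prodU; last first.
  apply: disjP => e /setUP[/(subsetP s1) eX | /(subsetP s2) eX] /(subsetP s3) eZ.
    exact: (disjE d13 eX eZ).
  exact: (disjE d23 eX eZ).
rewrite prodU //; apply: disjointWl s1 _; apply: disjointWr s2 _; exact: d12.
Qed.

Lemma perW_Z :
  \sum_(A : {set E} | comp A == W) q ^+ nc [set: V] A * \prod_(e in A) v e =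
  (q - 1 + \prod_(e in cut) (1 + v e)) * Cpol src tgt W v * Zpol src tgt (~: W) q v.
Proof.
rewrite sum_split // -expand /Cpol /Zpol sum3.
apply: eq_bigr => A1 /andP[s1 /eqP n1]; apply: eq_bigr => A2 s2; apply: eq_bigr => S s3.
rewrite (ncomp_dec iW jW s1 n1 s2 s3) prod3 // exprD.
have -> : q ^+ (S == set0) = (if S == set0 then q else 1) by case: (S == set0); rewrite ?expr1 ?expr0.
by rewrite rearr.
Qed.

Lemma perW_C :
  \sum_(A : {set E} | comp A == W) (if nc [set: V] A == 1%N then \prod_(e in A) v e else 0) =
  (\prod_(e in cut) (1 + v e) - 1) * Cpol src tgt W v * Cpol src tgt (~: W) v.
Proof.
have -> : Cpol src tgt (~: W) v = \sum_(A2 : {set E} | A2 \subset ind (~: W))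
    (if nc (~: W) A2 == 1%N then \prod_(e in A2) v e else 0).
  by rewrite /Cpol big_mkcondr.
have -> : \prod_(e in cut) (1 + v e) - 1 = \sum_(S : {set E} | S \subset cut)
    (if S == set0 then 0 else 1) * \prod_(e in S) v e.
  by rewrite expand add0r addrC.
rewrite sum_split // /Cpol sum3.
apply: eq_bigr => A1 /andP[s1 /eqP n1]; apply: eq_bigr => A2 s2; apply: eq_bigr => S s3.
rewrite (ncomp_dec iW jW s1 n1 s2 s3) prod3 //.
have jW' : j \in ~: W by rewrite inE.
have gt := ncomp_gt0 src tgt A2 jW'.
case: (S == set0).
  by rewrite addn1 eqSS (gtn_eqF gt) mul0r mulr0.
rewrite addn0; case: ifP => _; first by rewrite mul1r.
by rewrite mulr0 mul0r.
Qed.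
End SumW.

Theorem theorem4p1 (R : comNzRingType) (V E : finType) (src tgt : E -> V)
    (v : E -> R) (q : R) (i j : V) (hij : i != j) :
  Zpol src tgt [set: V] q v =
    \sum_(W : {set V} | (i \in W) && (j \notin W))
      (q - 1 + \prod_(e in cut_edges src tgt W j) (1 + v e))
        * Cpol src tgt W v * Zpol src tgt (~: W) q v
  /\
  Cpol src tgt [set: V] v =
    \sum_(W : {set V} | (i \in W) && (j \notin W))
      (\prod_(e in cut_edges src tgt W j) (1 + v e) - 1)
        * Cpol src tgt W v * Cpol src tgt (~: W) v.
Proof.
have subT (A : {set E}) : A \subset ind_edges src tgt [set: V].
  by apply/subsetP => e _; rewrite indE !inE.
have Qp (A : {set E}) : A \subset ind_edges src tgt [set: V] ->
    (i \in comp src tgt i j A) && (j \notin comp src tgt i j A).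
  by move=> _; rewrite comp_i (@comp_j _ _ src tgt i j [set i]) ?set11 // inE eq_sym.
split.
- rewrite {1}/Zpol; rewrite (partition_big (comp src tgt i j) (fun W : {set V} => (i \in W) && (j \notin W)) Qp) /=.
  apply: eq_bigr => W /andP[iW jW]; rewrite -(perW_Z src tgt v q iW jW).
  by apply: eq_bigl => A; rewrite subT.
- have -> : Cpol src tgt [set: V] v = \sum_(A : {set E} | A \subset ind_edges src tgt [set: V])
      (if ncomp src tgt [set: V] A == 1%N then \prod_(e in A) v e else 0).
    by rewrite /Cpol big_mkcondr.
  rewrite (partition_big (comp src tgt i j) (fun W : {set V} => (i \in W) && (j \notin W)) Qp) /=.
  apply: eq_bigr => W /andP[iW jW]; rewrite -(perW_C src tgt v iW jW).
  by apply: eq_bigl => A; rewrite subT.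
Qed.
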